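(* For every term variable $x$ and every $\delta\in\mathcal{T}_D$: $x\in[\![\delta]\!]$.
   Context: $\lambda\mu$-calculus (Parigot). Terms $M,N ::= x \mid \lambda x.M \mid MN \mid \mu\alpha.[\beta]M$ over disjoint denumerable sets of term variables and names. Structural substitution $T[\alpha\Leftarrow L]$ replaces every subterm $[\alpha]N$ of $T$ by $[\alpha]N'L$ where $N'=N[\alpha\Leftarrow L]$ (recursively). Reduction is the compatible closure of $(\lambda x.M)N\to M[N/x]$ (capture-avoiding) and $(\mu\beta.[\gamma]M)N\to\mu\beta.(([\gamma]M)[\beta\Leftarrow N])$. $\mathcal{SN}$ is the set of terms with no infinite reduction sequence. A stack is a finite (possibly empty) sequence $\vec L=L_1:\cdots:L_k$ of terms, and $M\vec L$ denotes $ML_1\cdots L_k$; $\mathcal{SN}^*$ is the set of stacks of terms in $\mathcal{SN}$. Types: with constant $\nu$ and symbol $\omega$ (not itself a type), $\mathcal{T}_D:\ \delta ::= \nu \mid \omega\to\nu \mid \kappa\to\nu \mid \delta\wedge\delta$; $\mathcal{T}_C:\ \kappa ::= \delta\times\omega \mid \delta\times\kappa \mid \kappa\wedge\kappa$. Interpretation: $[\![\nu]\!]=[\![\omega\to\nu]\!]=\mathcal{SN}$; $[\![\kappa\to\nu]\!]=\{M\mid \forall\vec L\in[\![\kappa]\!].\ M\vec L\in\mathcal{SN}\}$; $[\![\delta\times\omega]\!]=\{N:\vec L\mid N\in[\![\delta]\!],\vec L\in\mathcal{SN}^*\}$; $[\![\delta\times\kappa]\!]=\{N:\vec L\mid N\in[\![\delta]\!],\vec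 L\in[\![\kappa]\!]\}$; $[\![\sigma\wedge\tau]\!]=[\![\sigma]\!]\cap[\![\tau]\!]$. *)

(* Defs.v *)
(* lambda-mu-calculus (Parigot) with de Bruijn indices for
   both term variables and names (two independent index spaces). *)
From Stdlib Require Import Arith List.
Import ListNotations.

(* Terms:  M ::= x | \x.M | M N | mu alpha.[beta]M
   [Mu b M] represents  mu alpha.[beta]M  where the mu binds name index 0
   inside, and [b] is the name index of beta in the scope under the binder. *)
Inductive term : Type :=
| Var : nat -> term
| Lam : term -> term
| App : term -> term -> term
| Mu  : nat -> term -> term.

Fixpoint lift_t (c : nat) (t : term) : term :=
  match t with
  | Var n => if c <=? n then Var (S n) else Var n
  | Lam u => Lam (lift_t (S c) u)
  | App u v => App (lift_t c u) (lift_t c v)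
  | Mu b u => Mu b (lift_t c u)
  end.

Fixpoint lift_n (c : nat) (t : term) : term :=
  match t with
  | Var n => Var n
  | Lam u => Lam (lift_n c u)
  | App u v => App (lift_n c u) (lift_n c v)
  | Mu b u => Mu (if S c <=? b then S b else b) (lift_n (S c) u)
  end.

Fixpoint subst (k : nat) (N : term) (t : term) : term :=
  match t with
  | Var n => if n =? k then N else if k <? n then Var (pred n) else Var n
  | Lam u => Lam (subst (S k) (lift_t 0 N) u)
  | App u v => App (subst k N u) (subst k N v)
  | Mu b u => Mu b (subst k (lift_n 0 N) u)
  end.

(* structural substitution t[a <= L]: every [a]N becomes [a](N' L) *)
Fixpoint ssubst (a : nat) (L : term) (t : term) : term :=
  match t with
  | Var n => Var n
  | Lam u => Lam (ssubst a (lift_t 0 L) u)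
  | App u v => App (ssubst a L u) (ssubst a L v)
  | Mu b u =>
      let L' := lift_n 0 L in
      let u' := ssubst (S a) L' u in
      if b =? S a then Mu b (App u' L') else Mu b u'
  end.

Inductive step : term -> term -> Prop :=
| step_beta : forall M N, step (App (Lam M) N) (subst 0 N M)
| step_mu : forall g M N,
    (* (mu b.[g]M) N -> mu b.(([g]M)[b <= N]) *)
    let N' := lift_n 0 N in
    let M' := ssubst 0 N' M in
    step (App (Mu g M) N) (Mu g (if g =? 0 then App M' N' else M'))
| step_lam : forall M M', step M M' -> step (Lam M) (Lam M')
| step_appl : forall M M' N, step M M' -> step (App M N) (App M' N)
| step_appr : forall M N N', step N N' -> step (App M N) (App M N')
| step_mu_ctx : forall b M M', step M M' -> step (Mu b M) (Mu b M').

Definition SN (M : term) : Prop :=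
  ~ (exists f : nat -> term, f 0 = M /\ forall n, step (f n) (f (S n))).

Definition apps (M : term) (Ls : list term) : term := fold_left App Ls M.

(* Types: T_D (delta) and T_C (kappa) *)
Inductive dtype : Type :=
| Nu : dtype
| OmegaArr : dtype
| KArr : ctype -> dtype
| DAnd : dtype -> dtype -> dtype
with ctype : Type :=
| TimesOmega : dtype -> ctype
| Times : dtype -> ctype -> ctype
| CAnd : ctype -> ctype -> ctype.

Fixpoint interp_d (d : dtype) (M : term) {struct d} : Prop :=
  match d with
  | Nu => SN M
  | OmegaArr => SN M
  | KArr k => forall Ls : list term, interp_c k Ls -> SN (apps M Ls)
  | DAnd d1 d2 => interp_d d1 M /\ interp_d d2 M
  end
with interp_c (k : ctype) (s : list term) {struct k} : Prop :=
  match k with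
  | TimesOmega d =>
      match s with
      | [] => False
      | N :: Ls => interp_d d N /\ Forall SN Ls
      end
  | Times d k' =>
      match s with
      | [] => False
      | N :: Ls => interp_d d N /\ interp_c k' Ls
      end
  | CAnd k1 k2 => interp_c k1 s /\ interp_c k2 s
  end.

(* Main.v *)
Require Import Defs.
From Stdlib Require Import Arith List Lia Classical ClassicalEpsilon.
Import ListNotations.

Inductive SNi : term -> Prop :=
  SNi_intro M : (forall M', step M M' -> SNi M') -> SNi M.

Lemma SNi_SN : forall M, SNi M -> SN M.
Proof.
  intros M H. induction H as [M _ IH].
  intros [f [f0 fs]]. subst M.
  apply (IH (f 1) (fs 0)). exists (fun n => f (S n)). split; auto.
Qed.

Lemma SN_SNi : forall M, SN M -> SNi M.
Proof.
  intros M HM. apply NNPP. intro HN. apply HM.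
  assert (H : forall M, ~ SNi M -> {M' | step M M' /\ ~ SNi M'}).
  { intros M0 H0. apply constructive_indefinite_description.
    apply NNPP. intro C. apply H0. constructor. intros M' s.
    apply NNPP. intro C'. apply C. eauto. }
  pose (F := fun p : {M | ~ SNi M} =>
     match H _ (proj2_sig p) with exist _ M' h => exist (fun M => ~ SNi M) M' (proj2 h) end).
  pose (p0 := exist (fun M => ~ SNi M) M HN).
  exists (fun n => proj1_sig (Nat.iter n F p0)). split; [reflexivity|].
  intro n. simpl. generalize (Nat.iter n F p0). intros q.
  unfold F. destruct (H _ (proj2_sig q)) as [M' h]. simpl. exact (proj1 h).
Qed.

Inductive neu : term -> Prop :=
| neu_var x : neu (Var x)
| neu_app M N : neu M -> neu (App M N).

Lemma neu_step : forall M M', step M M' -> neu M -> neu M'.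
Proof.
  intros M M' s. induction s; intro H; inversion H; subst;
    try match goal with h : neu (Lam _) |- _ => inversion h end;
    try match goal with h : neu (Mu _ _) |- _ => inversion h end;
    constructor; auto.
Qed.

Lemma SNi_app_neu : forall M, SNi M -> neu M -> forall N, SNi N -> SNi (App M N).
Proof.
  intros M HM. induction HM as [M HM IHM]. intros Hn N HN.
  induction HN as [N HN IHN].
  constructor. intros T s. inversion s; subst.
  - inversion Hn.
  - inversion Hn.
  - apply IHM; auto. eapply neu_step; eauto. constructor; auto.
  - apply IHN; auto.
Qed.

Lemma SNi_apps : forall Ls M, neu M -> SNi M -> Forall SNi Ls -> SNi (apps M Ls).
Proof.
  induction Ls as [|N Ls IH]; intros M Hn HM HL; simpl; auto.
  inversion HL; subst. apply IH.
  - constructor; auto.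
  - apply SNi_app_neu; auto.
  - auto.
Qed.

Lemma SNi_app_l : forall T, SNi T -> forall M N, T = App M N -> SNi M.
Proof.
  intros T H. induction H as [T _ IH]. intros M N ->.
  constructor. intros M' s. eapply IH. apply step_appl. exact s. reflexivity.
Qed.

Lemma SNi_apps_head : forall Ls M, SNi (apps M Ls) -> SNi M.
Proof.
  induction Ls as [|N Ls IH]; intros M H; simpl in *; auto.
  apply IH in H. eapply SNi_app_l; eauto.
Qed.

Lemma SN_var : forall x, SN (Var x).
Proof. intro x. apply SNi_SN. constructor. intros M' s. inversion s. Qed.

Scheme dtype_mut := Induction for dtype Sort Prop
with ctype_mut := Induction for ctype Sort Prop.

Lemma main_mut :
  forall d, (forall x, interp_d d (Var x)) /\ (forall M, interp_d d M -> SN M).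
Proof.
  apply (dtype_mut
    (fun d => (forall x, interp_d d (Var x)) /\ (forall M, interp_d d M -> SN M))
    (fun k => (exists n, forall m, n <= m -> interp_c k (repeat (Var 0) m))
              /\ (forall Ls, interp_c k Ls -> Forall SN Ls))).
  - simpl. split; auto. apply SN_var.
  - simpl. split; auto. apply SN_var.
  - intros k [[n Hn] HL]. simpl. split.
    + intros x Ls HLs. apply SNi_SN. apply SNi_apps.
      constructor. apply SN_SNi, SN_var.
      apply HL in HLs. eapply Forall_impl; [|exact HLs]. apply SN_SNi.
    + intros M H. apply SNi_SN. apply SNi_apps_head with (repeat (Var 0) n).
      apply SN_SNi. apply H. apply Hn. lia.
  - intros d1 [H1 H1'] d2 [H2 H2']. simpl. split; auto.
    intros M [HM _]; auto.
  - intros d [Hd Hd']. split.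
    + exists 1. intros m Hm. destruct m as [|m]; [lia|]. simpl. split; auto.
      apply Forall_forall. intros y Hy. apply repeat_spec in Hy. subst y. apply SN_var.
    + intros [|N Ls] H; simpl in H; [contradiction|]. destruct H. constructor; auto.
  - intros d [Hd Hd'] k [[n Hn] Hk]. split.
    + exists (S n). intros m Hm. destruct m as [|m]; [lia|]. simpl. split; auto.
      apply Hn. lia.
    + intros [|N Ls] H; simpl in H; [contradiction|]. destruct H. constructor; auto.
  - intros k1 [[n1 H1] H1'] k2 [[n2 H2] H2']. split.
    + exists (Nat.max n1 n2). intros m Hm. simpl. split; [apply H1|apply H2]; lia.
    + intros Ls [HL _]. auto.
Qed.

Theorem mainTheorem9 : forall (x : nat) (d : dtype), interp_d d (Var x).
Proof. intros x d. apply (proj1 (main_mut d)). Qed.
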